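(* Let $(G,H,\mathcal{L})$ be a cut-and-project scheme, let $U\subseteq H$ be non-empty open and $W\subseteq H$ compact with $U\subseteq W$, and let $\Gamma\subseteq G$ satisfy $\Lambda_U\subseteq\Gamma\subseteq\Lambda_W$. Let $(s_\alpha)$ be a net in $G$ such that $(s_\alpha+\Gamma)$ converges vaguely to some point set $\Gamma'\subseteq G$ and such that $((-s_\alpha,0)+\mathcal{L})$ converges in $(G\times H)/\mathcal{L}$ to some $(s,t)+\mathcal{L}$. Then $\Lambda_{U+t}\subseteq s+\Gamma'\subseteq\Lambda_{W+t}$.
   Context: A cut-and-project scheme $(G,H,\mathcal{L})$ consists of locally compact abelian groups $G,H$ and a discrete cocompact subgroup $\mathcal{L}\subseteq G\times H$ such that $\pi^G|_{\mathcal{L}}$ is injective and $\pi^H(\mathcal{L})$ is dense in $H$. For $W\subseteq H$, $\Lambda_W=\pi^G(\mathcal{L}\cap(G\times W))$. Point sets are identified with their Dirac combs $\sum_{g\in\Lambda}\delta_g$, and convergence of point sets is vague convergence of these measures. $(G\times H)/\mathcal L$ carries the quotient topology. *)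

(* Defs.v *)
From HB Require Import structures.
From mathcomp Require Import all_boot all_order all_algebra.
From mathcomp Require Import all_classical all_reals all_analysis.
Set Implicit Arguments. Unset Strict Implicit. Unset Printing Implicit Defensive.
Import Order.TTheory GRing.Theory Num.Theory numFieldNormedType.Exports.
Local Open Scope classical_set_scope.
Local Open Scope ring_scope.

Definition directed_set (I : Type) (le : I -> I -> Prop) : Prop :=
  [/\ (forall i, le i i),
      (forall i j k, le i j -> le j k -> le i k),
      (exists i : I, True) &
      (forall i j, exists k, le i k /\ le j k)].

Definition net_eventually (I : Type) (le : I -> I -> Prop) (P : I -> Prop) : Prop :=
  exists i0, forall i, le i0 i -> P i.

Definition LCA (G : topologicalZmodType) : Prop :=
  hausdorff_space G /\ locally_compact [set: G].

Definition subgroup (M : zmodType) (L : set M) : Prop :=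
  L 0 /\ (forall x y, L x -> L y -> L (x - y)).

Definition discrete_subset (T : topologicalType) (L : set T) : Prop :=
  forall x, L x -> exists O : set T, [/\ open O, O x & O `&` L = [set x]].

(* L-saturated subsets of M (preimages of subsets of M/L) *)
Definition saturated (M : zmodType) (L : set M) (O : set M) : Prop :=
  forall x l, O x -> L l -> O (x + l).

(* compactness of the quotient M/L with the quotient topology, unfolded:
   open sets of M/L correspond to L-saturated open sets of M *)
Definition cocompact (G H : topologicalZmodType) (L : set (G * H)) : Prop :=
  forall (J : Type) (O : J -> set (G * H)),
    (forall j, open (O j) /\ saturated L (O j)) ->
    \bigcup_j O j = setT ->
    exists D : set J, finite_set D /\ \bigcup_(j in D) O j = setT.

Definition cut_and_project_scheme (G H : topologicalZmodType) (L : set (G * H)) : Prop :=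
  [/\ LCA G, LCA H,
      [/\ subgroup L, discrete_subset L & cocompact L],
      (forall p q, L p -> L q -> p.1 = q.1 -> p = q) &
      closure (snd @` L) = setT].

Definition Lambda (G H : zmodType) (L : set (G * H)) (W : set H) : set G :=
  fst @` (L `&` [set p | W p.2]).

Definition translate (M : zmodType) (s : M) (A : set M) : set M :=
  [set s + a | a in A].

(* the net x_a + L converges to y + L in the quotient topology: every
   open neighbourhood of y + L (= image of an L-saturated open set containing y)
   eventually contains x_a + L *)
Definition quotient_net_cvg (G H : topologicalZmodType) (L : set (G * H))
    (I : Type) (le : I -> I -> Prop) (x : I -> G * H) (y : G * H) : Prop :=
  forall O : set (G * H), open O -> saturated L O -> O y ->
    net_eventually le (fun i => O (x i)).

Definition locally_finite (G : topologicalType) (A : set G) : Prop :=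
  forall K, compact K -> finite_set (A `&` K).

Definition Cc (R : realType) (G : topologicalType) (f : G -> R) : Prop :=
  continuous f /\ exists K : set G, compact K /\ forall x, ~ K x -> f x = 0.

(* integral of f against the Dirac comb of the point set A *)
Definition dirac_comb (R : realType) (G : topologicalType) (A : set G) (f : G -> R) : R :=
  \sum_(g \in A) f g.

Definition vague_net_cvg (R : realType) (G : topologicalType)
    (I : Type) (le : I -> I -> Prop) (A : I -> set G) (B : set G) : Prop :=
  forall f : G -> R, Cc f ->
    forall e : R, 0 < e ->
      net_eventually le (fun i => `|dirac_comb (A i) f - dirac_comb B f| < e).

(* Main.v *)
Require Import Defs.
From HB Require Import structures.
From mathcomp Require Import all_boot all_order all_algebra.
From mathcomp Require Import all_classical all_reals all_analysis.
From mathcomp Require Import finmap.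
From mathcomp Require Import lra.
Import Order.TTheory GRing.Theory Num.Theory numFieldNormedType.Exports.
Local Open Scope classical_set_scope.
Local Open Scope ring_scope.

Section Helpers.
Variable M : topologicalZmodType.

Lemma cont_subl (c : M) : continuous (fun a : M => c - a).
Proof.
move=> x.
apply: (@continuous_comp _ _ _ (fun a : M => (c, a)) (fun p : M * M => p.1 - p.2)).
  by apply: cvg_pair; [exact: cvg_cst | exact: cvg_id].
exact: sub_continuous.
Qed.

Lemma cont_subr (c : M) : continuous (fun a : M => a - c).
Proof.
move=> x.
apply: (@continuous_comp _ _ _ (fun a : M => (a, c)) (fun p : M * M => p.1 - p.2)).
  by apply: cvg_pair; [exact: cvg_id | exact: cvg_cst].
exact: sub_continuous.
Qed.

Lemma cont_addl (c : M) : continuous (fun a : M => c + a).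
Proof.
move=> x.
apply: (@continuous_comp _ _ _ (fun a : M => (c, a)) (fun p : M * M => p.1 + p.2)).
  by apply: cvg_pair; [exact: cvg_cst | exact: cvg_id].
exact: add_continuous.
Qed.

Lemma subsub (a b c : M) : (a - c) - (b - c) = a - b.
Proof. by rewrite opprB addrA subrK. Qed.

Lemma small_diff (A : set M) : nbhs 0 A ->
  exists A' : set M, [/\ open A', A' 0 & forall a b, A' a -> A' b -> A (a - b)].
Proof.
move=> nA.
have : nbhs ((0 : M, 0 : M).1 - (0 : M, 0 : M).2) A by rewrite /= subr0.
move=> /(@sub_continuous M (0, 0)) [[A1 A2] /= [n1 n2] sub].
exists (interior (A1 `&` A2)); split.
- exact: open_interior.
- by rewrite /interior /=; exact: filterI.
- move=> a b /interior_subset [a1 _] /interior_subset [_ b2].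
  exact: (sub (a, b)).
Qed.

End Helpers.

Definition pp (G H : topologicalZmodType) := (G * H)%type.
HB.instance Definition _ (G H : topologicalZmodType) := Topological.copy (pp G H) (G*H)%type.
HB.instance Definition _ (G H : topologicalZmodType) := isPointed.Build (pp G H) (0,0).
Lemma cc (G H : topologicalZmodType) (C : set (G * H)) : compact C -> @cover_compact (pp G H) C.
Proof. move=> h. rewrite -compact_cover. exact: h. Qed.


Lemma finL (G H : topologicalZmodType) (L : set (G * H)) :
  subgroup L -> discrete_subset L -> forall C, compact C -> finite_set (L `&` C).
Proof.
move=> [L0 LB] dL C cC.
have [Oz [oO O0 OL]] := dL 0 L0.
have nO : nbhs (0 : G * H) Oz by apply: open_nbhs_nbhs; split.
case: nO => -[A B] /= [nA nB] sAB.
have [A' [oA' A'0 dA']] := @small_diff G A nA.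
have [B' [oB' B'0 dB']] := @small_diff H B nB.
pose f := fun c : pp G H => [set p : G * H | A' (p.1 - c.1) /\ B' (p.2 - c.2)].
have hof : forall c, C c -> open (f c).
  move=> c _.
  have -> : f c = (fun p : G * H => p.1 - c.1) @^-1` A' `&` (fun p : G * H => p.2 - c.2) @^-1` B' by [].
  apply: openI.
  - apply: (proj1 (continuousP _)) => //= p.
    apply: (@continuous_comp _ _ _ fst (fun a => a - c.1)); first exact: cvg_fst.
    exact: cont_subr.
  - apply: (proj1 (continuousP _)) => //= p.
    apply: (@continuous_comp _ _ _ snd (fun a => a - c.2)); first exact: cvg_snd.
    exact: cont_subr.
have cov : C `<=` cover C f.
  move=> c Cc; exists c => //; rewrite /f /= !subrr; split => //.
have [D' _ sD'] := @cc G H C cC _ _ f hof cov.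
have hsub : L `&` C `<=` \bigcup_(c in [set` D']) (L `&` f c).
  move=> p [Lp Cp]; have [c Dc fcp] := sD' p Cp; by exists c.
apply: (sub_finite_set hsub).
apply: bigcup_finite; first exact: finite_fset.
move=> c _.
have uniq1 : forall p q, (L `&` f c) p -> (L `&` f c) q -> p = q.
  move=> p q [Lp [ap bp]] [Lq [aq bq]].
  have Lpq : L (p - q) by exact: LB.
  have Opq : Oz (p - q).
    apply: sAB; split => /=.
    - by rewrite -(@subsub G p.1 q.1 c.1); exact: dA'.
    - by rewrite -(@subsub H p.2 q.2 c.2); exact: dB'.
  have : (Oz `&` L) (p - q) by split.
  by rewrite OL => /= /subr0_eq.
case: (pselect (exists p, (L `&` f c) p)) => [[p Pp]|np].
  apply: (@sub_finite_set _ _ [set p]); last exact: finite_set1.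
  by move=> q Pq; rewrite /= (uniq1 _ _ Pq Pp).
apply: (@sub_finite_set _ _ set0); last exact: finite_set0.
by move=> q Pq; apply: np; exists q.
Qed.

Lemma open_shift (G H : topologicalZmodType) (c : G * H) (A : set G) (B : set H) :
  open A -> open B -> open [set p : G * H | A (p.1 - c.1) /\ B (p.2 - c.2)].
Proof.
move=> oA oB.
have -> : [set p : G * H | A (p.1 - c.1) /\ B (p.2 - c.2)] =
   (fun p : G * H => p.1 - c.1) @^-1` A `&` (fun p : G * H => p.2 - c.2) @^-1` B by [].
apply: openI.
- apply: (proj1 (continuousP _)) => //= p.
  apply: (@continuous_comp _ _ _ fst (fun a => a - c.1)); first exact: cvg_fst.
  exact: cont_subr.
- apply: (proj1 (continuousP _)) => //= p.
  apply: (@continuous_comp _ _ _ snd (fun a => a - c.2)); first exact: cvg_snd.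
  exact: cont_subr.
Qed.

Lemma lift (G H : topologicalZmodType) (L : set (G * H)) (I : Type) (le : I -> I -> Prop)
  (sa : I -> G) (s : G) (t : H) :
  subgroup L -> quotient_net_cvg L le (fun i => (- sa i, 0)) (s, t) ->
  forall (A : set G) (B : set H), nbhs s A -> nbhs t B ->
  net_eventually le (fun i => exists l, L l /\ A (- sa i - l.1) /\ B (- l.2)).
Proof.
move=> [L0 LB] qc A B nA nB.
pose Oz := [set p : G * H | exists l, L l /\ A° (p.1 - l.1) /\ B° (p.2 - l.2)].
have oO : open Oz.
  have -> : Oz = \bigcup_(l in L) [set p : G * H | A° (p.1 - l.1) /\ B° (p.2 - l.2)].
    by apply/seteqP; split => p; [case=> l [Ll hl]; exists l | case=> l Ll hl; exists l].
  by apply: bigcup_open => l _; apply: open_shift; exact: open_interior.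
have sO : saturated L Oz.
  move=> x l' [l [Ll [h1 h2]]] Ll'; exists (l + l'); split.
    by have := LB l (0 - l') Ll (LB 0 l' L0 Ll'); rewrite sub0r opprK.
  by rewrite /= (addrC l.1 l'.1) (addrC l.2 l'.2) !addrKA.
have Ost : Oz (s, t).
  exists 0; split => //=; rewrite !subr0; split; [exact: nA | exact: nB].
have [i0 hi0] := qc Oz oO sO Ost.
exists i0 => i /hi0 [l [Ll [h1 h2]]]; exists l; split => //.
move: h1 h2 => /= /interior_subset h1; rewrite sub0r => /interior_subset h2; by [].
Qed.

Lemma fin_trans (G H : topologicalZmodType) (L : set (G * H)) (W : set H) (Gam : set G) :
  subgroup L -> discrete_subset L -> compact W -> Gam `<=` Lambda L W ->
  forall (c : G) (K : set G), compact K -> finite_set (translate c Gam `&` K).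
Proof.
move=> sL dL cW GW c K cK.
pose C := ((fun a : G => a - c) @` K) `*` W.
have cC : compact C.
  apply: compact_setX => //; apply: continuous_compact => //.
  apply: continuous_subspaceT; exact: cont_subr.
have fLC := @finL G H L sL dL C cC.
apply: (sub_finite_set _ (finite_image (fun q : G * H => c + q.1) fLC)).
move=> y [[g Gg <-] Ky].
have [q [Lq Wq] qg] := GW g Gg.
exists q; last by rewrite qg.
split => //; split => //=.
exists (c + g) => //; rewrite qg.
by rewrite [c + g]addrC addrK.
Qed.
Lemma bump (R : realType) (G : topologicalType) :
  hausdorff_space G -> locally_compact [set: G] ->
  forall (Gm : set G), locally_finite Gm -> forall (z : G) (V : set G), open V -> V z ->
  exists f : G -> R, [/\ Cc f, (forall x, 0 <= f x), f z = 1,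
     (forall x, ~ V x -> f x = 0) & (forall x, Gm x -> x <> z -> f x = 0)].
Proof.
move=> hG lc Gm lf z V oV Vz.
have [K0 nK0 [cK0 _]] := lc z I.
have nK : nbhs z K0 by move: nK0; rewrite withinET.
pose V' := V `&` interior K0.
have oV' : open V' by apply: openI => //; exact: open_interior.
have V'z : V' z by split => //; rewrite /interior; exact: nK.
pose F0 := (Gm `&` K0) `\` [set z].
have fF0 : finite_set F0 by apply: (sub_finite_set _ (lf K0 cK0)) => x [].
have cF0 : closed F0 by exact: (proj1 accessible_finite_set_closed (hausdorff_accessible hG)).
pose B := ~` V' `|` F0.
have cB : closed B by apply: closedU => //; exact: open_closedC.
have nBz : ~ B z by case=> [//|[_ /= ]].
have sep := @locally_compact_completely_regular G R lc hG z B cB nBz.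
pose u := Urysohn (R := R) [set z] B.
have u0 : u z = 0 by apply: (Urysohn_sub0 sep); exists z.
have u1 : forall x, B x -> u x = 1 by move=> x Bx; apply: (Urysohn_sub1 sep); exists x.
have ur : forall x, 0 <= u x <= 1.
  by move=> x; have := Urysohn_range (R := R) (A := [set z]) (B := B) (t := u x) (ex_intro2 _ _ x I erefl); rewrite /= in_itv.
exists (fun x => 1 - u x); split.
- split.
    move=> x; exact: (cvgB (cvg_cst (1:R)) (@Urysohn_continuous G R _ _ x)).
  exists K0; split => // x nKx.
  by rewrite u1 ?subrr //; left => -[_ /interior_subset].
- by move=> x; rewrite subr_ge0; case/andP: (ur x).
- by rewrite u0 subr0.
- by move=> x nVx; rewrite u1 ?subrr //; left => -[].
- move=> x Gx xz; rewrite u1 ?subrr //.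
  case: (pselect (K0 x)) => Kx; first by right; split.
  by left => -[_ /interior_subset].
Qed.

Lemma ev_and (I : Type) (le : I -> I -> Prop) (P Q : I -> Prop) :
  directed_set le -> net_eventually le P -> net_eventually le Q -> exists i, P i /\ Q i.
Proof.
move=> [_ _ _ dir] [i0 hP] [j0 hQ]; have [k [ik jk]] := dir i0 j0.
by exists k; split; [exact: hP | exact: hQ].
Qed.

Lemma comb_ge (R : realType) (G : topologicalType) (A : set G) (f : G -> R) (K : set G) (y : G) :
  (forall x, 0 <= f x) -> (forall x, ~ K x -> f x = 0) -> finite_set (A `&` K) -> A y ->
  f y <= dirac_comb A f.
Proof.
move=> f0 fK fin Ay; rewrite /dirac_comb.
have -> : \sum_(g \in A) f g = \sum_(g \in A `&` K) f g.
  apply/esym/fsbig_widen => // x [Ax nx]; rewrite /= fK //; by move=> Kx; apply: nx.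
case: (pselect (K y)) => Ky; last first.
  by rewrite fK //; apply: fsumr_ge0 => x _; exact: f0.
rewrite (fsbigD1 y) //= lerDl; apply: fsumr_ge0 => x _; exact: f0.
Qed.

Lemma comb_nz (R : realType) (G : topologicalType) (A : set G) (f : G -> R) :
  dirac_comb A f != 0 -> exists y, A y /\ f y != 0.
Proof.
move=> h; apply: contrapT => hn; move/eqP: h; apply; apply: fsbig1 => x Ax.
by apply/eqP; apply: contrapT => /negP fx; apply: hn; exists x.
Qed.

Lemma nbhs_fin_forall (T : topologicalType) (Y : choiceType) (x : T) (F : set Y) (Q : Y -> set T) :
  finite_set F -> (forall m, F m -> nbhs x (Q m)) -> nbhs x (fun q => forall m, F m -> Q m q).
Proof.
move=> /finite_fsetP [X ->] h.
suff : forall s : seq Y, (forall m, m \in s -> nbhs x (Q m)) ->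
  nbhs x (fun q => forall m, m \in s -> Q m q) by apply; exact: h.
elim => [|a s IH] hs.
  by apply: filterS filterT => q _ m.
apply: (@filterS _ (nbhs x) _ (Q a `&` (fun q => forall m, m \in s -> Q m q))); last first.
  exact: filterI (hs a (mem_head a s)) (IH (fun m ms => hs m (@mem_behead _ (a :: s) m ms))).
move=> q [qa qs] m; rewrite in_cons => /orP [/eqP -> //|]; exact: qs.
Qed.

Theorem lemma4p1 (R : realType) (G H : topologicalZmodType) (L : set (G * H))
  (U W : set H) (Gam Gam' : set G)
  (I : Type) (le : I -> I -> Prop) (sa : I -> G) (s : G) (t : H) :
  cut_and_project_scheme L ->
  open U -> U !=set0 -> compact W -> U `<=` W ->
  Lambda L U `<=` Gam -> Gam `<=` Lambda L W ->
  directed_set le ->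
  locally_finite Gam' ->
  vague_net_cvg R le (fun i => translate (sa i) Gam) Gam' ->
  quotient_net_cvg L le (fun i => (- sa i, 0)) (s, t) ->
  Lambda L (translate t U) `<=` translate s Gam' /\
  translate s Gam' `<=` Lambda L (translate t W).
Proof.
move=> [[hG lcG] [hH lcH] [sL dL _] _ _] oU _ cW _ LUG GLW dir lf vag qc.
have lft := @lift G H L I le sa s t sL qc.
have [L0 LB] := sL.
split.
- move=> _ [p [Lp [u Uu pu]] <-].
  exists (p.1 - s); last by rewrite addrC subrK.
  apply: contrapT => nG.
  have [f [[cf [K [cK fK]]] f0 fz fV fG]] :=
    @bump R G hG lcG Gam' lf (p.1 - s) setT openT Logic.I.
  have comb0 : dirac_comb Gam' f = 0.
    by apply: fsbig1 => x Gx; apply: fG => // xz; apply: nG; rewrite -xz.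
  pose A := [set a : G | 1/2 < f (p.1 - a)].
  have nA : nbhs s A.
    have : nbhs (f (p.1 - s)) [set r : R | 1/2 < r].
      by apply: open_nbhs_nbhs; split; [exact: open_gt | rewrite /= fz; lra].
    exact: (continuous_comp (@cont_subl G p.1 s) (cf _)).
  pose B := [set b : H | U (p.2 - b)].
  have nB : nbhs t B.
    have : nbhs (p.2 - t) U.
      by apply: open_nbhs_nbhs; split => //; rewrite -pu [t + u]addrC addrK.
    exact: (@cont_subl H p.2 t).
  have ev1 := lft A B nA nB.
  have h12 : (0:R) < 1/2 by lra.
  have ev2 := vag f (conj cf (ex_intro _ K (conj cK fK))) (1/2) h12.
  have [i [[l [Ll [Al Bl]]] hv]] := @ev_and _ _ _ _ dir ev1 ev2.
  rewrite comb0 subr0 in hv.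
  pose m := p + l.
  have Lm : L m by have := LB p (0 - l) Lp (LB 0 l L0 Ll); rewrite sub0r opprK.
  have Um : U m.2 by move: Bl; rewrite /B /= opprK.
  have Gm : Gam m.1 by apply: LUG; exists m.
  have Ay : translate (sa i) Gam (sa i + m.1) by exists m.1.
  have fy : 1/2 < f (sa i + m.1).
    by move: Al; rewrite /A /= opprB opprK addrA addrC.
  have fin := @fin_trans G H L W Gam sL dL cW GLW (sa i) K cK.
  have := @comb_ge _ _ _ _ _ _ f0 fK fin Ay.
  have := ler_norm (dirac_comb (translate (sa i) Gam) f).
  lra.
- move=> _ [a Ga <-].
  apply: contrapT => H0.
  pose z := s + a.
  have [KG nKG [cKG _]] := lcG z Logic.I.
  have nKG' : nbhs z KG by move: nKG; rewrite withinET.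
  have [KH nKH [cKH _]] := lcH t Logic.I.
  have nKH' : nbhs t KH by move: nKH; rewrite withinET.
  pose C := KG `*` ((fun bw : H * H => bw.1 + bw.2) @` (KH `*` W)).
  have cC : compact C.
    apply: compact_setX => //; apply: continuous_compact; last exact: compact_setX.
    apply: continuous_subspaceT; exact: add_continuous.
  have fF := @finL G H L sL dL C cC.
  pose Q := fun (m : G * H) (q : G * H) => q.1 <> m.1 \/ ~ W (m.2 - q.2).
  have nQ : forall m, (L `&` C) m -> nbhs (z, t) (Q m).
    move=> m [Lm _]; case: (pselect (m.1 = z)) => [mz|mz].
    + have nW : ~ W (m.2 - t).
        move=> Wm; apply: H0; exists m => //; split => //.
        by exists (m.2 - t) => //; rewrite addrC subrK.
      apply: (@filterS _ _ _ ((fun q : G * H => m.2 - q.2) @^-1` (~` W))).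
        by move=> q hq; right.
      apply: open_nbhs_nbhs; split => //.
      apply: (proj1 (continuousP _)); last by rewrite openC; exact: compact_closed.
      move=> q; apply: (@continuous_comp _ _ _ snd (fun b => m.2 - b)); first exact: cvg_snd.
      exact: cont_subl.
    + apply: (@filterS _ _ _ (fst @^-1` (~` [set m.1]))).
        by move=> q hq; left.
      apply: open_nbhs_nbhs; split; last by move=> /= e; apply: mz; rewrite e.
      apply: (proj1 (continuousP _)); last first.
        by rewrite openC; exact: accessible_closed_set1 (hausdorff_accessible hG) _.
      move=> q; exact: cvg_fst.
  have nQall := @nbhs_fin_forall _ _ _ _ _ fF nQ.
  pose N := fun q : G * H => (KG q.1 /\ KH q.2) /\ forall m, (L `&` C) m -> Q m q.
  have nN : nbhs (z, t) N.
    apply: filterI => //; exists (KG, KH) => //= q [] //.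
  case: nN => -[NG NH] /= [nNG nNH] sN.
  have nNG' : nbhs (a + s) NG by rewrite addrC.
  have [[VG A] /= [nVG nA] sVA] := @add_continuous G (a, s) _ nNG'.
  have [f [[cf [K [cK fK]]] f0 fa fV fG]] :=
    @bump R G hG lcG Gam' lf a (interior VG) (@open_interior G VG) nVG.
  have comb1 : dirac_comb Gam' f = 1.
    rewrite /dirac_comb -(fsbig_widen [set a] Gam' f) ?fsbig_set1 //.
      by move=> x ->.
    by move=> x [Gx nxa]; rewrite /= fG //; move=> e; apply: nxa; rewrite e.
  have ev1 := lft A NH nA nNH.
  have ev2 := vag f (conj cf (ex_intro _ K (conj cK fK))) 1 ltr01.
  have [i [[l [Ll [Al Bl]]] hv]] := @ev_and _ _ _ _ dir ev1 ev2.
  rewrite comb1 in hv.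
  have nz : dirac_comb (translate (sa i) Gam) f != 0.
    by apply/eqP => e; move: hv; rewrite e sub0r normrN normr1 ltxx.
  have [_ [[g Gg <-] fy]] := @comb_nz _ _ _ _ nz.
  have Vy : VG (sa i + g).
    apply: interior_subset; apply: contrapT => nV; move/eqP: fy; apply; exact: fV.
  have [r [Lr Wr] rg] := GLW g Gg.
  pose m := r - l.
  have Lm : L m by exact: LB.
  pose q := (m.1, - l.2).
  have NGq : NG q.1.
    have := sVA (sa i + g, - sa i - l.1) (conj Vy Al).
    by rewrite /= -rg addrA [sa i + r.1]addrC addrK.
  have [[KGq KHq] Qq] := sN q (conj NGq Bl).
  have Fm : (L `&` C) m.
    split => //; split => //.
    by exists (- l.2, r.2) => //=; rewrite addrC.
  case: (Qq m Fm) => [//|]; apply.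
  by rewrite /= opprK subrK.
Qed.
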